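(* Let $\mathscr{H}$ be a finite-dimensional complex Hilbert space and, for $i=1,\dots,n$, let $A_i=\{a^{(i)}_k\}_{k=1}^{m_i}$ be a tight frame of $\mathscr{H}$ with frame bound $\alpha_i>0$. Then $A_1,\dots,A_n$ are $s$-order incompatible if and only if $\sum_{i=1}^{n}n_{A_i}(|\varphi\rangle)\ge s$ for every nonzero $|\varphi\rangle\in\mathscr{H}$ with equality attained for some nonzero $|\varphi\rangle$, i.e. $\min_{|\varphi\rangle\neq0}\sum_{i=1}^{n}n_{A_i}(|\varphi\rangle)=s$.
   Context: A finite family $\{a_k\}_{k=1}^{m}\subset\mathscr{H}$ is a tight frame with frame bound $\alpha>0$ if $\sum_{k=1}^{m}|\langle x,a_k\rangle|^2=\alpha\|x\|^2$ for all $x\in\mathscr{H}$. Write $I_i=\{1,\dots,m_i\}$. The tight frames $A_1,\dots,A_n$ are called $s$-order incompatible, for an integer $s$, if: (1) for all nonempty $S_i\subseteq I_i$ ($i=1,\dots,n$) with $\sum_i|S_i|<s$ and every nonzero $x\in\mathscr{H}$, the equalities $\sum_{k\in S_i}|\langle x,a^{(i)}_k\rangle|^2=\alpha_i\|x\|^2$ do not hold simultaneously for all $i=1,\dots,n$; and (2) there exist nonempty $S_i\subseteq I_i$ with $\sum_i|S_i|=s$ and a nonzero $x\in\mathscr{H}$ such that these equalities hold for all $i$. For a vector $|\varphi\rangle$, $n_{A_i}(|\varphi\rangle)$ is the number of indices $k$ with $\langle a^{(i)}_k,\varphi\rangle\neq0$. *)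

(* Defs.v *)
(* H = C^d (standard inner product), C = R[i] with R : realType. *)
From HB Require Import structures.
From mathcomp Require Import all_boot all_order all_algebra.
From mathcomp Require Import complex.
From mathcomp Require Import reals.
Set Implicit Arguments. Unset Strict Implicit. Unset Printing Implicit Defensive.
Import Order.TTheory GRing.Theory Num.Theory.
Local Open Scope ring_scope.

Section Defs.
Variables (R : realType) (d : nat).
Local Notation C := R[i].

Definition inner (x y : 'rV[C]_d) : C := \sum_(j < d) x 0 j * (y 0 j)^*.

Definition sqnorm (x : 'rV[C]_d) : C := \sum_(j < d) `|x 0 j| ^+ 2.

Definition tight_frame (m : nat) (a : 'I_m -> 'rV[C]_d) (alpha : C) : Prop :=
  0 < alpha /\ forall x : 'rV[C]_d,
    \sum_(k < m) `|inner x (a k)| ^+ 2 = alpha * sqnorm x.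

Definition all_eq (n : nat) (m : 'I_n -> nat)
  (a : forall i : 'I_n, 'I_(m i) -> 'rV[C]_d) (alpha : 'I_n -> C)
  (S : forall i : 'I_n, {set 'I_(m i)}) (x : 'rV[C]_d) : Prop :=
  forall i : 'I_n, \sum_(k in S i) `|inner x (a i k)| ^+ 2 = alpha i * sqnorm x.

Definition s_order_incompatible (n : nat) (m : 'I_n -> nat)
  (a : forall i : 'I_n, 'I_(m i) -> 'rV[C]_d) (alpha : 'I_n -> C) (s : nat) : Prop :=
  (forall S : forall i : 'I_n, {set 'I_(m i)},
     (forall i, S i != set0) -> (\sum_(i < n) #|S i| < s)%N ->
     forall x : 'rV[C]_d, x != 0 -> ~ all_eq a alpha S x) /\
  (exists S : forall i : 'I_n, {set 'I_(m i)},
     (forall i, S i != set0) /\ (\sum_(i < n) #|S i|)%N = s /\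
     exists x : 'rV[C]_d, x != 0 /\ all_eq a alpha S x).

Definition nA (m : nat) (a : 'I_m -> 'rV[C]_d) (phi : 'rV[C]_d) : nat :=
  #|[set k : 'I_m | inner (a k) phi != 0]|.
End Defs.

(* Main.v *)
Require Import Defs.
From HB Require Import structures.
From mathcomp Require Import all_boot all_order all_algebra.
From mathcomp Require Import complex.
From mathcomp Require Import reals.
Import Order.TTheory GRing.Theory Num.Theory.
Local Open Scope ring_scope.

Lemma inner_conj (R : realType) (d : nat) (x y : 'rV[R[i]]_d) :
  inner y x = (inner x y)^*.
Proof.
rewrite /inner rmorph_sum; apply: eq_bigr => j _.
by rewrite rmorphM /= conjCK mulrC.
Qed.

Lemma inner_neq0 (R : realType) (d : nat) (x y : 'rV[R[i]]_d) :
  (inner y x != 0) = (inner x y != 0).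
Proof. by rewrite inner_conj conjC_eq0. Qed.

Lemma key (R : realType) (d m : nat) (a : 'I_m -> 'rV[R[i]]_d) (alpha : R[i])
  (x : 'rV[R[i]]_d) (S : {set 'I_m}) :
  tight_frame a alpha ->
  (\sum_(k in S) `|inner x (a k)| ^+ 2 = alpha * sqnorm x) <->
  [set k | inner (a k) x != 0] \subset S.
Proof.
move=> [_ Ht]; rewrite -Ht [X in _ = X](bigID (mem S)) /= [X in _ = X]addrC.
split.
- move=> /eqP; rewrite eq_sym -subr_eq0 addrK => /eqP /psumr_eq0P H.
  apply/subsetP => k; rewrite inE inner_neq0 => nz; apply/negPn/negP => kS.
  move: (H (fun _ _ => exprn_ge0 2 (normr_ge0 _)) k kS) => /eqP.
  by rewrite sqrf_eq0 normr_eq0 (negPf nz).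
- move=> /subsetP sub; rewrite [X in _ = X + _]big1 ?add0r // => k kS.
  have: k \notin [set k | inner (a k) x != 0].
    by apply/negP => /sub; rewrite (negPf kS).
  rewrite inE negbK => /eqP E0; rewrite inner_conj E0 conjC0.
  by rewrite normr0 expr0n.
Qed.

Lemma supp_nonempty (R : realType) (d m : nat) (a : 'I_m -> 'rV[R[i]]_d) (alpha : R[i])
  (x : 'rV[R[i]]_d) :
  tight_frame a alpha -> x != 0 -> [set k | inner (a k) x != 0] != set0.
Proof.
move=> [apos Ht] xnz; apply/eqP => E.
have : alpha * sqnorm x = 0.
  rewrite -Ht big1 // => k _.
  have : k \notin [set k | inner (a k) x != 0] by rewrite E inE.
  by rewrite inE negbK => /eqP E0; rewrite inner_conj E0 conjC0 normr0 expr0n.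
apply/eqP; rewrite mulf_neq0 ?(gt_eqF apos) //.
have [j xj] : exists j, x 0 j != 0.
  apply/existsP; apply: contraNT xnz; rewrite negb_exists => /forallP H.
  by apply/eqP/matrixP => i j; rewrite ord1 mxE; apply/eqP; rewrite -[_ == _]negbK H.
rewrite /sqnorm (bigD1 j) //= paddr_eq0 ?sumr_ge0 ?exprn_ge0 //; last first.
  by move=> *; rewrite exprn_ge0.
by rewrite sqrf_eq0 normr_eq0 (negPf xj).
Qed.

Arguments key {R d m a alpha} x S.
Arguments supp_nonempty {R d m a alpha x}.

Theorem mainTheorem6 (R : realType) (d n : nat) (m : 'I_n -> nat)
  (a : forall i : 'I_n, 'I_(m i) -> 'rV[R[i]]_d) (alpha : 'I_n -> R[i]) (s : nat) :
  (forall i : 'I_n, tight_frame (a i) (alpha i)) ->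
  (s_order_incompatible a alpha s <->
   ((forall phi : 'rV[R[i]]_d, phi != 0 -> (s <= \sum_(i < n) nA (a i) phi)%N) /\
    (exists phi : 'rV[R[i]]_d, phi != 0 /\ (\sum_(i < n) nA (a i) phi)%N = s))).
Proof.
move=> Ht.
pose supp x i := [set k | inner (a i k) x != 0].
have suppE x : all_eq a alpha (supp x) x.
  by move=> i; apply/(key _ _ (Ht i)).
have subE S x : all_eq a alpha S x -> forall i, supp x i \subset S i.
  by move=> H i; apply/(key _ _ (Ht i)).
have le_sum (S : forall i, {set 'I_(m i)}) x : (forall i, supp x i \subset S i) ->
    (\sum_(i < n) nA (a i) x <= \sum_(i < n) #|S i|)%N.
  by move=> H; apply: leq_sum => i _; rewrite /nA; apply: subset_leq_card; exact: H.
have A1 : (forall S : forall i : 'I_n, {set 'I_(m i)},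
     (forall i, S i != set0) -> (\sum_(i < n) #|S i| < s)%N ->
     forall x : 'rV[R[i]]_d, x != 0 -> ~ all_eq a alpha S x) ->
   forall phi : 'rV[R[i]]_d, phi != 0 -> (s <= \sum_(i < n) nA (a i) phi)%N.
  move=> H phi nz; rewrite leqNgt; apply/negP => lt.
  apply: (H (supp phi) _ lt phi nz (suppE phi)).
  by move=> i; apply: supp_nonempty (Ht i) nz.
split.
- move=> [H1 [S [Sne [Ssum [x [xnz Hx]]]]]].
  have B := A1 H1.
  split=> //; exists x; split=> //.
  apply/eqP; rewrite eqn_leq B // andbT -Ssum.
  exact/le_sum/subE.
- move=> [H1 [x [xnz Hx]]]; split.
  + move=> S Sne lt y ynz Hy.
    have := le_sum _ _ (subE _ _ Hy).
    have := H1 _ ynz.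
    move=> h1 h2; have := leq_trans h1 h2; by rewrite leqNgt lt.
  + exists (supp x); split.
      by move=> i; apply: supp_nonempty (Ht i) xnz.
    split; first by rewrite -Hx.
    by exists x; split.
Qed.
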